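(* Let $(a_k)_{k\in\mathbb{Z}}$ be real numbers, all but finitely many zero, $N\ge1$, and let $c:\mathbb{Z}^N\to\mathbb{R}$ be square-summable and $\widetilde S_N$-invariant. Then there exists a sequence $(c_n)_{n\ge1}$ of real-valued, finitely supported, $\widetilde S_N$-invariant functions on $\mathbb{Z}^N$ such that $T_{D_0}c_n\to T_{D_0}c$ in $L^2(\mathbb{Z}^N)$ as $n\to\infty$.
   Context: $\widetilde S_N$ is the group of transformations of $\mathbb{Z}^N$ generated by the coordinate transpositions $\sigma_{i,j}$ ($1\le i,j\le N$) and $\gamma_1(z_1,\dots,z_N)=(-z_1,z_2-z_1,\dots,z_N-z_1)$. For $c:\mathbb{Z}^N\to\mathbb{R}$, the operator $T_{D_0}$ associated with $D_0=\sum_ka_k\partial_k$ is $(T_{D_0}c)(z)=\sum_{k\in\mathbb{Z}}a_k\,c(z-ke)$, where $e=(1,\dots,1)\in\mathbb{Z}^N$. *)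

(* Defs.v *)
From HB Require Import structures.
From mathcomp Require Import all_boot all_order all_algebra.
From mathcomp Require Import all_classical all_reals all_analysis.
Set Implicit Arguments. Unset Strict Implicit. Unset Printing Implicit Defensive.
Import Order.TTheory GRing.Theory Num.Theory.
Local Open Scope ring_scope.

Definition pt (N : nat) := {ffun 'I_N -> int}.

Definition sigma (N : nat) (i j : 'I_N) (z : pt N) : pt N :=
  [ffun k => z (if k == i then j else if k == j then i else k)].

(* gamma_1 (z_1,...,z_N) = (-z_1, z_2 - z_1, ..., z_N - z_1);
   i0 is the first coordinate *)
Definition gamma1 (N : nat) (i0 : 'I_N) (z : pt N) : pt N :=
  [ffun k => if k == i0 then - z i0 else z k - z i0].

(* the group \tilde S_N: generated (under composition) by the sigma_{i,j} and
   gamma_1; all generators are involutions, so closure under composition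
   starting from the identity yields the whole generated group. *)
Inductive inSN (N : nat) (i0 : 'I_N) : (pt N -> pt N) -> Prop :=
| inSN_id : inSN i0 id
| inSN_sigma (i j : 'I_N) g : inSN i0 g -> inSN i0 (sigma i j \o g)
| inSN_gamma g : inSN i0 g -> inSN i0 (gamma1 i0 \o g).

Definition SN_invariant (R : realType) (N : nat) (i0 : 'I_N) (c : pt N -> R) :=
  forall g, inSN i0 g -> forall z, c (g z) = c z.

Definition shift (N : nat) (z : pt N) (k : int) : pt N := [ffun i => z i - k].

(* T_{D_0} c (z) = sum_k a_k c(z - k e), where s lists (without repetition)
   a set of indices outside of which a vanishes *)
Definition TD0 (R : realType) (N : nat) (a : int -> R) (s : seq int)
  (c : pt N -> R) (z : pt N) : R :=
  \sum_(k <- s) a k * c (shift z k).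

Definition sq_summable (R : realType) (N : nat) (c : pt N -> R) :=
  (\esum_(z in [set: pt N]) ((c z ^+ 2)%:E) < +oo)%E.

Definition fin_supp (R : realType) (N : nat) (c : pt N -> R) :=
  exists S : seq (pt N), forall z, z \notin S -> c z = 0.

(* Main.v *)
Set Warnings "-notation-overridden,-ambiguous-paths,-notation-incompatible-prefix".
Require Import Defs.
From HB Require Import structures.
From mathcomp Require Import all_boot all_order all_algebra.
From mathcomp Require Import all_classical all_reals all_analysis.
From mathcomp Require Import ring lra zify.
Set Implicit Arguments. Unset Strict Implicit.
Import Order.TTheory GRing.Theory Num.Theory.
Local Open Scope classical_set_scope.
Local Open Scope ring_scope.
Section Aux.
Variables (R : realType) (N : nat).
Implicit Types (f : pt N -> R).

Lemma esum_le_seq f (M : R) :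
  (forall r : seq (pt N), uniq r -> \sum_(x <- r) f x <= M) ->
  (\esum_(z in [set: pt N]) (f z)%:E <= M%:E)%E.
Proof.
move=> H; apply: ge_ereal_sup => y [A [finA _] <-].
rewrite fsbig_finite // sumEFin lee_fin; apply: H; exact: finmap.fset_uniq.
Qed.

Lemma seq_le_esum f (r : seq (pt N)) : uniq r ->
  ((\sum_(x <- r) f x)%:E <= \esum_(z in [set: pt N]) (f z)%:E)%E.
Proof.
move=> ur; apply: ereal_sup_ubound; exists [set` r].
  by split; [exact: finite_seq | by []].
by rewrite -fsbig_seq // sumEFin.
Qed.

Lemma tail_small f (e : R) : (0 < e) -> (forall x, 0 <= f x) ->
  (\esum_(z in [set: pt N]) (f z)%:E < +oo)%E ->
  exists r : seq (pt N), forall r' : seq (pt N), uniq r' ->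
    (forall x, x \in r' -> x \notin r) -> \sum_(x <- r') f x <= e.
Proof.
move=> e0 f0 fin.
set S := (\esum_(z in [set: pt N]) (f z)%:E).
have S0 : (0 <= S)%E by apply: esum_ge0 => x _; rewrite lee_fin.
have Sf : S \is a fin_num by rewrite ge0_fin_numE.
have [y [A [finA _] <-] Hy] := ub_ereal_sup_adherent e0 Sf.
set F := finmap.enum_fset (fset_set A).
exists F => r' ur' dis.
have ucat : uniq (r' ++ F).
  rewrite cat_uniq ur' finmap.fset_uniq andbT /=; apply/hasPn => x xF; apply/negP => /dis; by rewrite xF.
have h2 := @seq_le_esum f _ ucat; rewrite big_cat /= in h2.
rewrite fsbig_finite // sumEFin in Hy.
have h1 : (S - e%:E < (\sum_(x <- F) f x)%:E)%E := Hy.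
move: h1 h2; rewrite -/S -(fineK Sf) -EFinN -EFinD !lte_fin !lee_fin.
set u := \sum_(x <- r') f x; set v := \sum_(x <- F) f x.
move=> h1 h2; lra.
Qed.
End Aux.
Section Grp.
Variables (N : nat).
Implicit Types (z : pt N) (i j k : 'I_N).
Definition Qb (n : nat) (z : pt N) : bool :=
  [forall i, `|z i| <= n%:Z] && [forall i, forall j, `|z i - z j| <= (n%:Z)].

Lemma QbP n z : reflect ((forall i, `|z i| <= n%:Z) /\ (forall i j, `|z i - z j| <= n%:Z)) (Qb n z).
Proof.
apply: (iffP andP) => [[/forallP h1 /forallP h2]|[h1 h2]]; split.
- exact: h1.
- by move=> i j; have /forallP := h2 i; apply.
- by apply/forallP.
- by apply/forallP => i; apply/forallP.
Qed.

Lemma sigmaK i j : cancel (sigma i j) (sigma i j).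
Proof.
move=> z; apply/ffunP => k; rewrite !ffunE; congr (z _).
case Hi: (k == i); case Hj: (k == j) => /=; repeat (case: ifP => /eqP ? //=); move/eqP: Hi; move/eqP: Hj; congruence.
Qed.

Lemma gammaK (i0 : 'I_N) : cancel (gamma1 i0) (gamma1 i0).
Proof.
move=> z; apply/ffunP => k; rewrite /gamma1 !ffunE eqxx.
case: (eqVneq k i0) => [->|ki]; first by rewrite opprK.
by rewrite opprK subrK.
Qed.

Lemma Qb_sigma1 n i j z : Qb n z -> Qb n (sigma i j z).
Proof.
move=> /QbP [h1 h2]; apply/QbP; split => [k|k l]; rewrite !ffunE; [exact: h1|exact: h2].
Qed.

Lemma Qb_gamma1 n (i0 : 'I_N) z : Qb n z -> Qb n (gamma1 i0 z).
Proof.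
move=> /QbP [h1 h2]; apply/QbP; split => [k|k l]; rewrite !ffunE.
  case: ifP => _; [rewrite normrN; exact: h1 | exact: h2].
case: ifP => _; case: ifP => _.
- by rewrite subrr normr0.
- have := h1 l; lia.
- have := h1 k; lia.
- have := h2 k l; lia.
Qed.

Lemma Qb_sigma n i j z : Qb n (sigma i j z) = Qb n z.
Proof.
apply/idP/idP => [h|]; last exact: Qb_sigma1.
by rewrite -(sigmaK i j z); apply: Qb_sigma1.
Qed.

Lemma Qb_gamma n (i0 : 'I_N) z : Qb n (gamma1 i0 z) = Qb n z.
Proof.
apply/idP/idP => [h|]; last exact: Qb_gamma1.
by rewrite -(gammaK i0 z); apply: Qb_gamma1.
Qed.

Lemma Qb_SN n (i0 : 'I_N) g z : inSN i0 g -> Qb n (g z) = Qb n z.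
Proof.
elim=> [//|i j g' _ IH|g' _ IH] /=; by rewrite ?Qb_sigma ?Qb_gamma.
Qed.

Lemma Qb_mono n m z : (n <= m)%N -> Qb n z -> Qb m z.
Proof.
move=> nm /QbP [h1 h2]; apply/QbP; split => [k|k l].
  have := h1 k; lia.
have := h2 k l; lia.
Qed.

Definition Kz (z : pt N) : nat := (\max_i `|z i|%N) * 2.

Lemma Qb_Kz z : Qb (Kz z) z.
Proof.
apply/QbP; rewrite /Kz; split => [k|k l].
  have := @leq_bigmax _ (fun i => `|z i|%N) k; lia.
have := @leq_bigmax _ (fun i => `|z i|%N) k; have := @leq_bigmax _ (fun i => `|z i|%N) l; lia.
Qed.

Lemma Qb_seq (r : seq (pt N)) : exists n0, forall n, (n0 <= n)%N -> forall z, z \in r -> Qb n z.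
Proof.
exists (\max_(z <- r) Kz z) => n hn z zr.
apply: Qb_mono (Qb_Kz z); apply: leq_trans hn.
by rewrite (big_rem z zr) /= leq_maxl.
Qed.
End Grp.
Section Box.
Variable N : nat.
Definition boxseq (n : nat) : seq (pt N) :=
  [seq [ffun i => ((f i : nat)%:Z - n%:Z)] | f : {ffun 'I_N -> 'I_(n+n).+1} <- enum {ffun 'I_N -> 'I_(n+n).+1}].
Lemma Qb_box n (z : pt N) : Qb n z -> z \in boxseq n.
Proof.
move=> /QbP [h1 _]; apply/mapP.
exists [ffun i => inord (absz (z i + n%:Z)) : 'I_(n+n).+1]; first by rewrite mem_enum.
apply/ffunP => i; have hi := h1 i; rewrite !ffunE inordK; last by rewrite -ltz_nat abszE; lia.
rewrite abszE ger0_norm ?addrK //; lia.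
Qed.

Lemma shift_inj (k : int) : injective (fun z : pt N => Defs.shift z k).
Proof.
move=> z1 z2 /ffunP h; apply/ffunP => i; have := h i; rewrite !ffunE; exact: addIr.
Qed.
End Box.

Section Est.
Variables (R : realType) (a : int -> R) (s : seq int) (N : nat) (c : pt N -> R).

Definition cnf (n : nat) (z : pt N) : R := if Qb n z then c z else 0.
Definition enf (n : nat) (z : pt N) : R := if Qb n z then 0 else c z.
Definition Cst : R := \sum_(k <- s) \sum_(l <- s) (a k ^+ 2 + a l ^+ 2).

Lemma Cst_ge0 : 0 <= Cst.
Proof.
apply: sumr_ge0 => k _; apply: sumr_ge0 => l _; apply: addr_ge0; exact: sqr_ge0.
Qed.

Lemma diff_eq n z : TD0 a s (cnf n) z - TD0 a s c z = - \sum_(k <- s) a k * enf n (Defs.shift z k).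
Proof.
rewrite /TD0 -sumrB -sumrN; apply: eq_bigr => k _; rewrite /cnf /enf.
case: ifP => _; ring.
Qed.

Lemma sq_sum_le (y : int -> R) :
  (\sum_(k <- s) y k) ^+ 2 <= \sum_(k <- s) \sum_(l <- s) (y k ^+ 2 + y l ^+ 2).
Proof.
rewrite expr2 mulr_suml; apply: ler_sum => k _; rewrite mulr_sumr; apply: ler_sum => l _.
nra.
Qed.

Lemma est n (eps : R) :
  (forall k (r : seq (pt N)), uniq r -> \sum_(z <- r) enf n (Defs.shift z k) ^+ 2 <= eps) ->
  forall r : seq (pt N), uniq r ->
  \sum_(z <- r) (TD0 a s (cnf n) z - TD0 a s c z) ^+ 2 <= Cst * eps.
Proof.
move=> H r ur.
apply: (@le_trans _ _ (\sum_(z <- r) \sum_(k <- s) \sum_(l <- s)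
   (a k ^+ 2 * enf n (Defs.shift z k) ^+ 2 + a l ^+ 2 * enf n (Defs.shift z l) ^+ 2))).
  apply: ler_sum => z _; rewrite diff_eq sqrrN.
  apply: le_trans (sq_sum_le _) _; apply: ler_sum => k _; apply: ler_sum => l _.
  by rewrite !exprMn.
rewrite exchange_big /= /Cst mulr_suml; apply: ler_sum => k _.
rewrite exchange_big /= mulr_suml; apply: ler_sum => l _.
rewrite big_split /= -!mulr_sumr mulrDl.
apply: lerD; apply: ler_wpM2l; try exact: sqr_ge0; exact: H.
Qed.
End Est.

Theorem lemma5p1 (R : realType) (a : int -> R) (s : seq int)
  (hs : uniq s) (ha : forall k, k \notin s -> a k = 0)
  (N : nat) (hN : (0 < N)%N) (c : pt N -> R)
  (hc2 : sq_summable c) (hcinv : SN_invariant (Ordinal hN) c) :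
  exists cn : nat -> pt N -> R,
    (forall n, fin_supp (cn n) /\ SN_invariant (Ordinal hN) (cn n)) /\
    ((fun n => \esum_(z in [set: pt N])
                 (((TD0 a s (cn n) z - TD0 a s c z) ^+ 2)%:E))
       @ \oo --> 0%E).
Proof.
exists (cnf c); split.
  move=> n; split.
    exists (boxseq N n) => z zn; rewrite /cnf; case: ifP => // /Qb_box h; by rewrite h in zn.
  by move=> g hg z; rewrite /cnf (Qb_SN n z hg) (hcinv g hg).
set u := fun n => _.
have u0 n : (0 <= u n)%E.
  by apply: esum_ge0 => x _; rewrite lee_fin; exact: sqr_ge0.
have small d : 0 < d -> exists n0, forall n, (n0 <= n)%N -> (u n <= d%:E)%E.
  move=> d0.
  set C := Cst a s.
  have C0 : 0 <= C by exact: Cst_ge0.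
  set eps := d / (C + 1).
  have eps0 : 0 < eps by rewrite divr_gt0 // ltr_pwDr.
  have [F hF] := tail_small eps0 (fun x => sqr_ge0 (c x)) hc2.
  have [n0 hn0] := Qb_seq F.
  exists n0 => n hn.
  have H : forall k (r : seq (pt N)), uniq r -> \sum_(z <- r) enf c n (Defs.shift z k) ^+ 2 <= eps.
    move=> k r ur.
    rewrite -(big_map (fun z => Defs.shift z k) xpredT (fun w => enf c n w ^+ 2)).
    rewrite (bigID (Qb n)) /= big1 ?add0r; last by move=> w h; rewrite /enf h expr2 mulr0.
    rewrite (eq_bigr (fun w => c w ^+ 2)); last by move=> w /negbTE h; rewrite /enf h.
    rewrite -big_filter; apply: hF.
      by apply: filter_uniq; rewrite map_inj_uniq //; exact: shift_inj.
    move=> x; rewrite mem_filter => /andP [nq _]; apply/negP => xF.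
    by rewrite (hn0 n hn x xF) in nq.
  apply: le_trans (esum_le_seq (@est R a s N c n eps H)) _.
  rewrite lee_fin /eps mulrA ler_pdivrMr ?ltr_pwDr //. by rewrite -/C mulrDr mulr1 mulrC lerDl ltW.
have fin n d : 0 < d -> (u n <= d%:E)%E -> u n \is a fin_num.
  by move=> d0 h; rewrite ge0_fin_numE // (le_lt_trans h) // ltry.
apply/fine_cvgP; split.
  have [n0 h] := small 1 ltr01; exists n0 => // n /= hn.
  exact: (fin n 1 ltr01 (h n hn)).
apply/cvgrPdist_le => e e0; have [n0 h] := small e e0; exists n0 => // n /= hn.
have fn := fin n e e0 (h n hn).
rewrite sub0r normrN ger0_norm ?fine_ge0 //.
by rewrite -lee_fin fineK //; exact: h.
Qed.
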